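(* Let $A\in\mathbb{R}^{3\times 3}$ be an upper triangular $Z$-matrix whose diagonal entries are all nonnegative. If $A$ is a Karamardian matrix, then $A$ is range monotone.
   Context: A $Z$-matrix is a real square matrix whose off-diagonal entries are nonpositive. A square matrix $M$ is range monotone if $Mx\ge 0$ and $x\in R(M)$ imply $x\ge 0$. For $A\in\mathbb{R}^{n\times n}$ let $K_A=\mathbb{R}^n_+\cap R(A)$ and $K_A^*=\{y\in\mathbb{R}^n: x^Ty\ge 0 \text{ for all } x\in K_A\}$ (one has $K_A^*=\mathbb{R}^n_++N(A^T)$, and its interior is $\{a+b: a>0,\ b\in N(A^T)\}$). For $q\in\mathbb{R}^n$, LCP$(A,K_A,q)$ is to find $x$ with $x\in K_A$, $Ax+q\in K_A^*$, $x^T(Ax+q)=0$. $A$ is a Karamardian matrix if $K_A\ne\{0\}$ and there exists $d$ in the interior of $K_A^*$ such that both LCP$(A,K_A,0)$ and LCP$(A,K_A,d)$ have $x=0$ as their only solution. *)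

(* Defs.v *)
From HB Require Import structures.
From mathcomp Require Import all_boot all_order all_algebra.
From mathcomp Require Import reals.
Set Implicit Arguments. Unset Strict Implicit. Unset Printing Implicit Defensive.
Import Order.TTheory GRing.Theory Num.Theory.
Local Open Scope ring_scope.

Section Defs.
Variable R : realType.
Variable n : nat.

Definition vnonneg (x : 'cV[R]_n) : Prop := forall i, 0 <= x i 0.
Definition vpos (x : 'cV[R]_n) : Prop := forall i, 0 < x i 0.

Definition Zmatrix (A : 'M[R]_n) : Prop := forall i j, i != j -> A i j <= 0.

Definition in_range (M : 'M[R]_n) (x : 'cV[R]_n) : Prop := exists y, x = M *m y.
Definition in_null (M : 'M[R]_n) (x : 'cV[R]_n) : Prop := M *m x = 0.

Definition range_monotone (M : 'M[R]_n) : Prop :=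
  forall x : 'cV[R]_n, vnonneg (M *m x) -> in_range M x -> vnonneg x.

Definition KA (A : 'M[R]_n) (x : 'cV[R]_n) : Prop := vnonneg x /\ in_range A x.

Definition KA_dual (A : 'M[R]_n) (y : 'cV[R]_n) : Prop :=
  forall x, KA A x -> 0 <= (x^T *m y) 0 0.

(* interior of K_A^*, as given in the paper: { a + b : a > 0, b in N(A^T) } *)
Definition KA_dual_int (A : 'M[R]_n) (y : 'cV[R]_n) : Prop :=
  exists a b, vpos a /\ in_null A^T b /\ y = a + b.

Definition LCP_sol (A : 'M[R]_n) (q x : 'cV[R]_n) : Prop :=
  [/\ KA A x, KA_dual A (A *m x + q) & (x^T *m (A *m x + q)) 0 0 = 0].

Definition Karamardian (A : 'M[R]_n) : Prop :=
  (exists x, KA A x /\ x <> 0) /\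
  exists d, [/\ KA_dual_int A d,
               (forall x, LCP_sol A 0 x -> x = 0) &
               (forall x, LCP_sol A d x -> x = 0)].

End Defs.

(* Main.v *)
Require Import Defs.
From HB Require Import structures.
From mathcomp Require Import all_boot all_order all_algebra.
From mathcomp Require Import reals.
From mathcomp Require Import ring lra.
Import Order.TTheory GRing.Theory Num.Theory.
Local Open Scope ring_scope.

Lemma scal (R : realFieldType) (a p q b r c : R) :
  0 <= a -> 0 <= b -> 0 <= c -> p <= 0 -> q <= 0 -> r <= 0 ->
  (forall y0 y1 y2 : R,
     0 <= a*y0 + p*y1 + q*y2 -> 0 <= b*y1 + r*y2 -> 0 <= c*y2 ->
     a*(a*y0 + p*y1 + q*y2) + p*(b*y1 + r*y2) + q*(c*y2) = 0 ->
     b*(b*y1 + r*y2) + r*(c*y2) = 0 -> c*(c*y2) = 0 ->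
     a*y0 + p*y1 + q*y2 = 0 /\ b*y1 + r*y2 = 0 /\ c*y2 = 0) ->
  forall y0 y1 y2 : R,
  0 <= a*(a*y0 + p*y1 + q*y2) + p*(b*y1 + r*y2) + q*(c*y2) ->
  0 <= b*(b*y1 + r*y2) + r*(c*y2) -> 0 <= c*(c*y2) ->
  [/\ 0 <= a*y0 + p*y1 + q*y2, 0 <= b*y1 + r*y2 & 0 <= c*y2].
Proof.
move=> ha hb hc hp hq hr K y0 y1 y2 h0 h1 h2.
have Fi : a = 0 -> b = 0 -> p = 0.
  move=> a0 b0; apply/eqP; apply/negP => /negP pn0.
  have := K 0 p^-1 0; rewrite a0 b0 !(mul0r, mulr0, addr0, add0r) mulfV //.
  by case=> //; rewrite ?ler01 // => /eqP; rewrite oner_eq0.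
have [c0|cp] := eqVneq c 0.
  have [b0|bp] := eqVneq b 0.
    have [a0|ap] := eqVneq a 0.
      have p0 := Fi a0 b0.
      have := K 0 0 (-1); rewrite a0 b0 c0 p0 !(mul0r, mulr0, addr0, add0r).
      rewrite !mulrN1 !oppr_ge0 lexx; case=> // q0 [r0 _].
      move/eqP: q0; rewrite oppr_eq0 => /eqP q0; move/eqP: r0; rewrite oppr_eq0 => /eqP r0.
      rewrite q0 r0 !(mul0r, mulr0, addr0, add0r); split => //.
    have agt : 0 < a by rewrite lt0r ap.
    have [r0|rn] := eqVneq r 0.
      rewrite b0 c0 r0 !(mul0r, mulr0, addr0, add0r) in h0 *.
      split => //; nra.
    have := K ((-p - q*a/r)/a) 0 (a/r); rewrite b0 c0 !(mul0r, mulr0, addr0, add0r).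
    have -> : a * ((- p - q * a / r) / a) + q * (a / r) = -p.
      by field; rewrite ap rn.
    have -> : r * (a / r) = a by field.
    rewrite oppr_ge0 hp (ltW agt) lexx; case=> //; first by ring.
    by move=> _ [/eqP]; rewrite (negbTE ap).
  have bgt : 0 < b by rewrite lt0r bp.
  rewrite c0 !(mul0r, mulr0, addr0, add0r) in h0 h1 *.
  have x1p : 0 <= b * y1 + r * y2 by nra.
  have [a0|ap] := eqVneq a 0.
    set t := q - p * r / b.
    have [t0|tn] := eqVneq t 0.
      split => //. rewrite a0 !mul0r !add0r in h0. rewrite a0 mul0r add0r.
      have e : p * y1 + q * y2 = p * (b * y1 + r * y2) / b + t * y2 by rewrite /t; field.
      rewrite e t0 mul0r addr0. by rewrite divr_ge0 // ltW.
    have := K 0 (- r/(b*t)) (1/t); rewrite a0 c0 !(mul0r, mulr0, addr0, add0r).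
    have -> : p * (- r / (b * t)) + q * (1 / t) = 1.
      have etb : q*b - p*r = t*b by rewrite /t; field.
      rewrite /t in tn etb *; field; by rewrite bp etb mulf_neq0.
    have -> : b * (- r / (b * t)) + r * (1 / t) = 0 by field; rewrite bp tn.
    rewrite ler01 lexx !mulr0; case=> // /eqP; by rewrite oner_eq0.
  have agt : 0 < a by rewrite lt0r ap.
  split => //; nra.
have cgt : 0 < c by rewrite lt0r cp.
have x2p : 0 <= c * y2.
  by rewrite -(pmulr_rge0 _ cgt).
have [b0|bp] := eqVneq b 0.
  rewrite b0 !(mul0r, add0r) in h1 *.
  have x1p : 0 <= r * y2.
    by rewrite -(pmulr_rge0 _ cgt) mulrCA.
  have [a0|ap] := eqVneq a 0.
    have p0 := Fi a0 b0.
    rewrite a0 p0 !(mul0r, add0r) in h0 *.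
    split => //.
    by rewrite -(pmulr_rge0 _ cgt) mulrCA.
  have agt : 0 < a by rewrite lt0r ap.
  split => //; nra.
have bgt : 0 < b by rewrite lt0r bp.
have rx2 : r * (c * y2) <= 0 by nra.
have x1p : 0 <= b * y1 + r * y2.
  by rewrite -(pmulr_rge0 _ bgt); lra.
have [a0|ap] := eqVneq a 0; last first.
  have agt : 0 < a by rewrite lt0r ap.
  split => //; nra.
rewrite a0 !(mul0r, add0r) in h0 *.
have px1 : p * (b * y1 + r * y2) = 0 by nra.
have qx2 : q * (c * y2) = 0 by nra.
have prx2 : p * r * (c * y2) = 0 by nra.
have e : c * b * (p * y1 + q * y2) = c * p * (b * y1 + r * y2) - p * r * (c * y2) + b * (q * (c*y2)) by ring.
have : c * b * (p * y1 + q * y2) = 0 by rewrite e -mulrA px1 prx2 qx2; ring.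
by move/eqP; rewrite mulf_eq0 mulf_eq0 (negbTE cp) (negbTE bp) /= => /eqP ->.
Qed.

Definition o0 : 'I_3 := @Ordinal 3 0 isT.
Definition o1 : 'I_3 := @Ordinal 3 1 isT.
Definition o2 : 'I_3 := @Ordinal 3 2 isT.

Lemma ord3P (P : 'I_3 -> Prop) : P o0 -> P o1 -> P o2 -> forall i, P i.
Proof.
move=> h0 h1 h2 [[|[|[|i]]] Hi] //.
- by rewrite (_ : Ordinal Hi = o0) //; apply: val_inj.
- by rewrite (_ : Ordinal Hi = o1) //; apply: val_inj.
- by rewrite (_ : Ordinal Hi = o2) //; apply: val_inj.
Qed.

Lemma mulmx3 (R : realType) (M : 'M[R]_3) (v : 'cV[R]_3) i :
  (M *m v) i 0 = M i o0 * v o0 0 + M i o1 * v o1 0 + M i o2 * v o2 0.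
Proof.
rewrite mxE !big_ord_recr big_ord0 /= add0r.
by congr (_ + _ + _); congr (M i _ * v _ 0); apply: val_inj.
Qed.

Definition mk3 {R : realType} (u0 u1 u2 : R) : 'cV[R]_3 :=
  \col_(i < 3) nth 0 [:: u0; u1; u2] i.

Theorem mainTheorem9 (R : realType) (A : 'M[R]_3) :
  (forall i j : 'I_3, (j < i)%N -> A i j = 0) ->
  Zmatrix A ->
  (forall i : 'I_3, 0 <= A i i) ->
  Karamardian A ->
  range_monotone A.
Proof.
move=> Htri HZ Hd [_ [d [_ H0 _]]].
have A10 : A o1 o0 = 0 by apply: Htri.
have A20 : A o2 o0 = 0 by apply: Htri.
have A21 : A o2 o1 = 0 by apply: Htri.
have Av : forall v : 'cV[R]_3,
   [/\ (A *m v) o0 0 = A o0 o0 * v o0 0 + A o0 o1 * v o1 0 + A o0 o2 * v o2 0,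
       (A *m v) o1 0 = A o1 o1 * v o1 0 + A o1 o2 * v o2 0 &
       (A *m v) o2 0 = A o2 o2 * v o2 0].
  move=> v; rewrite !mulmx3 A10 A20 A21 !mul0r !add0r; split => //.
have K : forall y0 y1 y2 : R,
     0 <= A o0 o0*y0 + A o0 o1*y1 + A o0 o2*y2 -> 0 <= A o1 o1*y1 + A o1 o2*y2 -> 0 <= A o2 o2*y2 ->
     A o0 o0*(A o0 o0*y0 + A o0 o1*y1 + A o0 o2*y2) + A o0 o1*(A o1 o1*y1 + A o1 o2*y2) + A o0 o2*(A o2 o2*y2) = 0 ->
     A o1 o1*(A o1 o1*y1 + A o1 o2*y2) + A o1 o2*(A o2 o2*y2) = 0 -> A o2 o2*(A o2 o2*y2) = 0 ->
     A o0 o0*y0 + A o0 o1*y1 + A o0 o2*y2 = 0 /\ A o1 o1*y1 + A o1 o2*y2 = 0 /\ A o2 o2*y2 = 0.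
  move=> y0 y1 y2 g0 g1 g2 e0 e1 e2.
  set y := mk3 y0 y1 y2.
  have [z0 z1 z2] := Av (A *m y).
  have [w0 w1 w2] := Av y.
  have yv : [/\ y o0 0 = y0, y o1 0 = y1 & y o2 0 = y2] by rewrite !mxE.
  case: yv => yv0 yv1 yv2.
  rewrite yv0 yv1 yv2 in w0 w1 w2.
  have Az : A *m (A *m y) = 0.
    apply/matrixP => i j; rewrite [j]ord1 [in RHS]mxE; move: i; apply: ord3P.
    - by rewrite z0 w0 w1 w2.
    - by rewrite z1 w1 w2.
    - by rewrite z2 w2.
  have nn : vnonneg (A *m y).
    move=> i; rewrite -[i]/(i : 'I_3); move: i; apply: ord3P.
    - by rewrite w0.
    - by rewrite w1.
    - by rewrite w2.
  have Hs : LCP_sol A 0 (A *m y).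
    split.
    - by split => //; exists y.
    - by move=> x _; rewrite Az addr0 mulmx0 mxE.
    - by rewrite Az addr0 mulmx0 mxE.
  have := H0 _ Hs => /matrixP Hz.
  have := Hz o0 0; have := Hz o1 0; have := Hz o2 0.
  rewrite w0 w1 w2 !mxE => -> -> ->; split => //.
move=> x Hx [y Exy].
have [ax0 ax1 ax2] := Av x.
have [ey0 ey1 ey2] := Av y.
have Hx0 := Hx o0; have Hx1 := Hx o1; have Hx2 := Hx o2.
rewrite ax0 in Hx0; rewrite ax1 in Hx1; rewrite ax2 in Hx2.
rewrite Exy ey0 ey1 ey2 in Hx0 Hx1 Hx2.
have := @scal _ _ _ _ _ _ _ (Hd o0) (Hd o1) (Hd o2) (HZ o0 o1 isT) (HZ o0 o2 isT) (HZ o1 o2 isT) K (y o0 0) (y o1 0) (y o2 0) Hx0 Hx1 Hx2.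
case=> g0 g1 g2.
move=> i; rewrite Exy; move: i; apply: ord3P.
- by rewrite ey0.
- by rewrite ey1.
- by rewrite ey2.
Qed.
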